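(* Let $(R,\mathfrak{m})$ be a Noetherian local ring, let $f:M\to N$ be a homomorphism of finitely generated $R$-modules, and let $d=1+\mathrm{AR}(\mathfrak{m},\operatorname{im}(f)\subseteq N)$. Then for every $R$-linear map $\epsilon:M\to \mathfrak{m}^dN$, the initial module $(\ker(f+\epsilon))^*$ is a graded subquotient of $(\ker f)^*$, where both initial modules are computed inside $\mathrm{gr}_{\mathfrak{m}}(M)$.
   Context: For a Noetherian ring $R$, an ideal $I$ and finitely generated $R$-modules $N\subseteq M$, the Artin–Rees number $\mathrm{AR}(I,N\subseteq M)$ is the least integer $s$ such that $I^nM\cap N=I^{n-s}(I^sM\cap N)$ for all $n\ge s$. For a finitely generated $R$-module $M$, $\mathrm{gr}_{\mathfrak{m}}(M)=\bigoplus_{i\ge0}\mathfrak{m}^iM/\mathfrak{m}^{i+1}M$, a graded module over $\mathrm{gr}_{\mathfrak{m}}(R)=\bigoplus_{i\ge0}\mathfrak{m}^i/\mathfrak{m}^{i+1}$. For a submodule $L\subseteq M$, the initial module $L^*\subseteq \mathrm{gr}_{\mathfrak{m}}(M)$ is the kernel of the natural graded map $\mathrm{gr}_{\mathfrak{m}}(M)\to\mathrm{gr}_{\mathfrak{m}}(M/L)$; equivalently $L^*=\bigoplus_{i\ge0}(L\cap\mathfrak{m}^iM+\mathfrak{m}^{i+1}M)/\mathfrak{m}^{i+1}M$. ''Graded subquotient'' means that for every degree $p$, the degree-$p$ component of the first module is (as a $k=R/\mathfrak{m}$-vector space) a subquotient of the degree-$p$ component of the second. *)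

(* Defs.v *)
From HB Require Import structures.
From mathcomp Require Import all_boot all_order all_algebra.
Set Implicit Arguments. Unset Strict Implicit. Unset Printing Implicit Defensive.
Import GRing.Theory.
Local Open Scope ring_scope.

Section ModDefs.
Variable R : comNzRingType.

Definition gen (V : lmodType R) (S : V -> Prop) : V -> Prop :=
  fun x => exists (n : nat) (c : 'I_n -> R) (v : 'I_n -> V),
      (forall i, S (v i)) /\ x = \sum_(i < n) c i *: v i.

Definition is_submod (V : lmodType R) (S : V -> Prop) : Prop :=
  [/\ S 0, (forall x y, S x -> S y -> S (x + y)) & (forall r x, S x -> S (r *: x))].

Definition is_ideal (I : R -> Prop) : Prop :=
  [/\ I 0, (forall x y, I x -> I y -> I (x + y)) & (forall r x, I x -> I (r * x))].

Definition ideal_gen (S : R -> Prop) : R -> Prop :=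
  fun x => exists (n : nat) (c a : 'I_n -> R),
      (forall i, S (a i)) /\ x = \sum_(i < n) c i * a i.

Definition noetherian : Prop :=
  forall I : R -> Prop, is_ideal I ->
    exists (n : nat) (a : 'I_n -> R),
      forall x, I x <-> ideal_gen (fun y => exists i, y = a i) x.

Definition local_ring_max (m : R -> Prop) : Prop :=
  [/\ is_ideal m, ~ m 1 & forall x, ~ m x -> exists y, x * y = 1].

Definition fin_gen (V : lmodType R) : Prop :=
  exists (n : nat) (v : 'I_n -> V), forall x, gen (fun y => exists i, y = v i) x.

Fixpoint idpow (I : R -> Prop) (n : nat) : R -> Prop :=
  match n with
  | 0 => fun _ => True
  | n'.+1 => ideal_gen (fun y => exists a b, [/\ I a, idpow I n' b & y = a * b])
  end.

Definition idmul (V : lmodType R) (I : R -> Prop) (n : nat) (S : V -> Prop)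
  : V -> Prop :=
  gen (fun y => exists r x, [/\ idpow I n r, S x & y = r *: x]).

Definition idmulT (V : lmodType R) (I : R -> Prop) (n : nat) : V -> Prop :=
  idmul I n (fun _ : V => True).

Definition AR_holds (V : lmodType R) (I : R -> Prop) (N : V -> Prop) (s : nat)
  : Prop :=
  forall n, (s <= n)%N -> forall x,
    (idmulT I n x /\ N x) <-> idmul I (n - s) (fun y => idmulT I s y /\ N y) x.

Definition is_AR_number (V : lmodType R) (I : R -> Prop) (N : V -> Prop)
  (s : nat) : Prop :=
  AR_holds I N s /\ forall t, AR_holds I N t -> (s <= t)%N.

(* Degree-p component of the initial module L^* of L ⊆ V (w.r.t. m) is
   (L ∩ m^p V + m^(p+1) V) / m^(p+1) V.  We represent it by its numerator
   submodule of V: *)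
Definition init_num (V : lmodType R) (m : R -> Prop) (L : V -> Prop) (p : nat)
  : V -> Prop :=
  fun x => exists y z, [/\ L y, idmulT m p y, idmulT m p.+1 z & x = y + z].

(* Given submodules Q ⊆ W1 and Q ⊆ W2 of V, "W1/Q is a subquotient of W2/Q":
   there are submodules Q ⊆ B ⊆ A ⊆ W2 of V (so B/Q ⊆ A/Q ⊆ W2/Q) and an
   R-linear isomorphism A/B ≅ W1/Q, given by a map g on representatives:
   g maps A into W1, is R-linear modulo Q, has kernel B modulo Q, and is
   surjective modulo Q.  (Since m kills all these quotients, R-linearity is
   the same as k = R/m -linearity.) *)
Definition subquot_mod (V : lmodType R) (Q W1 W2 : V -> Prop) : Prop :=
  exists (A B : V -> Prop) (g : V -> V),
    is_submod A /\ is_submod B /\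
    (forall x, Q x -> B x) /\ (forall x, B x -> A x) /\ (forall x, A x -> W2 x) /\
    (forall x, A x -> W1 (g x)) /\
    (forall r x y, A x -> A y -> Q (g (r *: x + y) - (r *: g x + g y))) /\
    (forall x, A x -> (Q (g x) <-> B x)) /\
    (forall z, W1 z -> exists x, A x /\ Q (g x - z)).

Definition graded_subquot (V : lmodType R) (m : R -> Prop) (L1 L2 : V -> Prop)
  : Prop :=
  forall p : nat,
    subquot_mod (idmulT m p.+1) (init_num m L1 p) (init_num m L2 p).

End ModDefs.

(* Main.v *)
Require Import Defs.
From HB Require Import structures.
From mathcomp Require Import all_boot all_order all_algebra.
From mathcomp Require Import zify.
Import GRing.Theory.
Local Open Scope ring_scope.

Section Helpers.
Variable R : comNzRingType.

Lemma gen_sub (V : lmodType R) (S : V -> Prop) x : S x -> gen S x.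
Proof.
move=> Sx; exists 1%N, (fun _ => 1), (fun _ => x); split=> //.
by rewrite big_ord1 scale1r.
Qed.

Lemma gen_submod (V : lmodType R) (S : V -> Prop) : is_submod (gen S).
Proof.
split.
- by exists 0%N, (fun _ => 0), (fun _ => 0); split=> [[]//|]; rewrite big_ord0.
- move=> x y [n1 [c1 [v1 [H1 ->]]]] [n2 [c2 [v2 [H2 ->]]]].
  exists (n1 + n2)%N,
    (fun i => match split i with inl j => c1 j | inr j => c2 j end),
    (fun i => match split i with inl j => v1 j | inr j => v2 j end).
  split.
  + by move=> i; case: (split i).
  + rewrite big_split_ord /=; congr (_ + _); apply: eq_bigr => i _.
    * by have := unsplitK (inl _ i : 'I_n1 + 'I_n2) => /= ->.
    * by have := unsplitK (inr _ i : 'I_n1 + 'I_n2) => /= ->.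
- move=> r x [n [c [v [H ->]]]].
  exists n, (fun i => r * c i), v; split=> //.
  by rewrite scaler_sumr; apply: eq_bigr => i _; rewrite scalerA.
Qed.

Lemma gen_min (V : lmodType R) (S P : V -> Prop) :
  is_submod P -> (forall x, S x -> P x) -> forall x, gen S x -> P x.
Proof.
move=> [P0 PD PZ] SP x [n [c [v [H ->]]]].
elim/big_ind: _ => //; auto.
Qed.

Lemma ideal_genE (S : R -> Prop) x : ideal_gen S x <-> @gen R R^o S x.
Proof. by []. Qed.

Lemma idpow_ideal (I : R -> Prop) n : is_ideal (idpow I n).
Proof.
case: n => [|n] /=; first by split.
have := @gen_submod R^o (fun y : R^o => exists a b, [/\ I a, idpow I n b & y = a * b]).
by [].
Qed.

Lemma ideal_min (S P : R -> Prop) :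
  is_ideal P -> (forall x, S x -> P x) -> forall x, ideal_gen S x -> P x.
Proof.
move=> [P0 PD PZ] SP x Hx; apply: (@gen_min R^o S P) => //.
Qed.


Lemma idpow_mul (I : R -> Prop) a b r s :
  idpow I a r -> idpow I b s -> idpow I (a + b) (r * s).
Proof.
elim: a r s => [|a IH] r s.
  by move=> _ Hs; have [_ _ HZ] := idpow_ideal I b; rewrite add0n; exact: HZ.
move=> Hr; rewrite addSn /=.
pose P := fun r => forall s, idpow I b s ->
  ideal_gen (fun y => exists a0 b0, [/\ I a0, idpow I (a + b) b0 & y = a0 * b0]) (r * s).
have [G0 GD GZ] := idpow_ideal I (a + b).+1.
suff : P r by move=> /(_ s).
apply: (@ideal_min (fun y => exists a0 b0, [/\ I a0, idpow I a b0 & y = a0 * b0]) P) => //.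
- split.
  + by move=> t _; rewrite mul0r; exact: G0.
  + by move=> x y Hx Hy t Ht; rewrite mulrDl; apply: GD; [exact: Hx|exact: Hy].
  + by move=> c x Hx t Ht; rewrite -mulrA; apply: GZ; exact: Hx.
- move=> y [a0 [b0 [Ia0 Hb0 ->]]] t Ht.
  apply: (@gen_sub R^o); exists a0, (b0 * t); split=> //; first exact: IH.
  by rewrite mulrA.
Qed.

Lemma idpow_succ (I : R -> Prop) n r : idpow I n.+1 r -> idpow I n r.
Proof.
have [G0 GD GZ] := idpow_ideal I n.
apply: ideal_min; first exact: idpow_ideal.
by move=> y [a0 [b0 [_ Hb ->]]]; exact: GZ.
Qed.

Lemma idmulT_submod (V : lmodType R) I n : is_submod (@idmulT R V I n).
Proof. exact: gen_submod. Qed.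

Lemma idmulT_succ (V : lmodType R) I n (x : V) : idmulT I n.+1 x -> idmulT I n x.
Proof.
apply: gen_min; first exact: idmulT_submod.
move=> y [r [z [Hr _ ->]]]; apply: gen_sub; exists r, z; split=> //.
exact: idpow_succ.
Qed.

Lemma scale_idmul (V : lmodType R) I p q r (w : V) :
  idpow I p r -> idmulT I q w -> idmulT I (p + q) (r *: w).
Proof.
move=> Hr; have [G0 GD GZ] := @idmulT_submod V I (p + q).
apply: (@gen_min _ _ (fun w => idmulT I (p + q) (r *: w))).
- split.
  + by rewrite scaler0.
  + by move=> x y Hx Hy; rewrite scalerDr; exact: GD.
  + by move=> c x Hx; rewrite scalerA mulrC -scalerA; exact: GZ.
- move=> y [s [z [Hs _ ->]]]; apply: gen_sub; exists (r * s), z; split=> //.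
  + exact: idpow_mul.
  + by rewrite scalerA.
Qed.

Lemma lin_idmul (M N : lmodType R) (e : {linear M -> N}) I p q (x : M) :
  (forall y, idmulT I q (e y)) -> idmulT I p x -> idmulT I (p + q) (e x).
Proof.
move=> He; have [G0 GD GZ] := @idmulT_submod N I (p + q).
apply: (@gen_min _ _ (fun x => idmulT I (p + q) (e x))).
- split.
  + by rewrite linear0.
  + by move=> a b Ha Hb; rewrite linearD; exact: GD.
  + by move=> c a Ha; rewrite linearZ; exact: GZ.
- move=> y [s [z [Hs _ ->]]]; rewrite linearZ; exact: scale_idmul.
Qed.

Lemma idmul_im (M N : lmodType R) (f : {linear M -> N}) I k (S : N -> Prop) w :
  idmul I k (fun w => S w /\ exists x0, w = f x0) w ->
  exists x0, idmulT I k x0 /\ w = f x0.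
Proof.
have [G0 GD GZ] := @idmulT_submod M I k.
move: w; apply: (@gen_min N _ (fun w => exists x0, idmulT I k x0 /\ w = f x0)).
- split.
  + by exists 0; rewrite linear0.
  + by move=> a b [xa [Ha ->]] [xb [Hb ->]]; exists (xa + xb); rewrite linearD; split=> //; exact: GD.
  + by move=> c a [xa [Ha ->]]; exists (c *: xa); rewrite linearZ; split=> //; exact: GZ.
- move=> y [r [z [Hr [_ [x0 ->]] ->]]]; exists (r *: x0); rewrite linearZ; split=> //.
  apply: gen_sub; by exists r, x0.
Qed.
End Helpers.

Theorem corollary2p6 (R : comNzRingType) (m : R -> Prop)
  (M N : lmodType R) (f : {linear M -> N}) (ar : nat) :
  noetherian R -> local_ring_max m -> fin_gen M -> fin_gen N ->
  is_AR_number m (fun y : N => exists x : M, y = f x) ar ->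
  forall eps : {linear M -> N},
    (forall x : M, idmulT m ar.+1 (eps x)) ->
    graded_subquot m (fun x : M => f x + eps x = 0) (fun x : M => f x = 0).
Proof.
move=> _ _ _ _ [ARh _] eps Heps p.
have [Q0 QD QZ] := @idmulT_submod R M m p.+1.
have [P0 PD PZ] := @idmulT_submod R M m p.
have [N0 ND NZ] := @idmulT_submod R N m (p + ar.+1).
exists (init_num m (fun x : M => f x + eps x = 0) p), (idmulT m p.+1), id.
split; last split; last split; last split; last split; last split; last split;
  last split.
- split.
  + by exists 0, 0; split; rewrite ?linear0 ?addr0.
  + move=> a b [y1 [z1 [K1 H1 G1 ->]]] [y2 [z2 [K2 H2 G2 ->]]].
    exists (y1 + y2), (z1 + z2); split.
    * by rewrite !linearD addrACA K1 K2 addr0.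
    * exact: PD.
    * exact: QD.
    * by rewrite addrACA.
  + move=> r a [y1 [z1 [K1 H1 G1 ->]]].
    exists (r *: y1), (r *: z1); split.
    * by rewrite !linearZ -scalerDr K1 scaler0.
    * exact: PZ.
    * exact: QZ.
    * by rewrite scalerDr.
- exact: idmulT_submod.
- by [].
- by move=> x Hx; exists 0, x; split; rewrite ?linear0 ?addr0 ?add0r.
- move=> x [y [z [Ky Hy Hz ->]]].
  have He := @lin_idmul R M N eps m p ar.+1 y Heps Hy.
  have fyE : f y = - eps y by apply/eqP; rewrite -addr_eq0 Ky.
  have Hf : idmulT m (p + ar.+1) (f y) by rewrite fyE -scaleN1r; exact: NZ.
  have Hle : (ar <= p + ar.+1)%N by lia.
  have := (ARh (p + ar.+1)%N Hle (f y)).1 (conj Hf (ex_intro _ y erefl)).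
  have -> : (p + ar.+1 - ar)%N = p.+1 by lia.
  case/idmul_im => x0 [Hx0 fx0].
  exists (y - x0), (z + x0); split.
  + by rewrite linearB /= -fx0 subrr.
  + apply: PD => //; rewrite -scaleN1r; apply: PZ; exact: idmulT_succ.
  + exact: QD.
  + by rewrite addrA addrAC subrK.
- by [].
- by move=> r x y _ _; rewrite /= subrr.
- by [].
- by move=> z Hz; exists z; split; rewrite // subrr.
Qed.
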